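(* If $x\in\mathrm{Sort}_n(132,321)$, then $x$ avoids the bivincular pattern $132^{\star}$.
   Context: An occurrence of the bivincular pattern $132^{\star}$ in $x=x_1\cdots x_n$ is a triple of indices $a<b$, $b+1\le n$ with $x_a<x_{b+1}$ and $x_b=x_{b+1}+1$ (so $x_ax_bx_{b+1}$ is an occurrence of $132$ whose last two entries are adjacent in position and consecutive in value). A permutation contains a classical pattern $p$ if it has a subsequence order-isomorphic to $p$. For a set $T$ of patterns, the map $s_T$ is defined as follows: the entries of the input permutation are read from left to right, with an initially empty stack. At each step, if the input is nonempty and pushing the next input entry onto the stack produces a stack whose contents, read from top to bottom, avoid every pattern in $T$, that entry is pushed; otherwise the top entry of the stack is popped and appended to the output. When the input is exhausted, the remaining stack entries are popped one at a time to the output. Write $s_{\sigma,\tau}=s_{\{\sigma,\tau\}}$ and $s=s_{\{21\}}$ (West's stack-sorting map). $\mathrm{Sort}_n(\sigma,\tau)$ is the set of $x\in S_n$ with $s(s_{\sigma,\tau}(x))=12\cdots n$. *)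

(* Defs.v *)
From mathcomp Require Import all_boot.
Set Implicit Arguments. Unset Strict Implicit. Unset Printing Implicit Defensive.

Definition is_perm (n : nat) (x : seq nat) : bool := perm_eq x (iota 1 n).

Definition order_iso (s p : seq nat) : bool :=
  (size s == size p) &&
  all (fun i => all (fun j =>
     (nth 0 s i < nth 0 s j) == (nth 0 p i < nth 0 p j)) (iota 0 (size s)))
    (iota 0 (size s)).

Fixpoint bitseqs (k : nat) : seq bitseq :=
  if k is k'.+1 then [seq b :: m | b <- [:: true; false], m <- bitseqs k']
  else [:: [::]].

Definition contains (s p : seq nat) : bool :=
  has (fun m => order_iso (mask m s) p) (bitseqs (size s)).

Definition avoids_all (T : seq (seq nat)) (s : seq nat) : bool :=
  all (fun p => ~~ contains s p) T.

(* One run of the pattern-avoiding stack map s_T.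
   State: input (remaining), stack (head = top), output (reversed accumulator).
   Each iteration either pushes or pops; the fuel bound 2*n+1 suffices. *)
Fixpoint stack_run (T : seq (seq nat)) (fuel : nat)
    (inp stk out : seq nat) : seq nat :=
  match fuel with
  | 0 => rev out
  | f.+1 =>
    match inp with
    | a :: inp' =>
        if avoids_all T (a :: stk) then stack_run T f inp' (a :: stk) out
        else match stk with
             | b :: stk' => stack_run T f inp stk' (b :: out)
             | [::] => stack_run T f inp' [:: a] out (* unreachable for nonempty T-patterns of size >= 2 *)
             end
    | [::] =>
        match stk with
        | b :: stk' => stack_run T f [::] stk' (b :: out)
        | [::] => rev out
        end
    end
  end.

Definition stack_map (T : seq (seq nat)) (x : seq nat) : seq nat :=
  stack_run T (size x).*2.+1 x [::] [::].

Definition west (x : seq nat) : seq nat := stack_map [:: [:: 2; 1]] x.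

Definition Sort (n : nat) (sigma tau : seq nat) : pred (seq nat) :=
  fun x => is_perm n x && (west (stack_map [:: sigma; tau] x) == iota 1 n).

(* occurrence of the bivincular pattern 132* : indices a < b, b+1 < size x
   (0-based), with x_a < x_{b+1} and x_b = x_{b+1} + 1 *)
Definition contains_132star (x : seq nat) : Prop :=
  exists a b : nat, [/\ a < b, b.+1 < size x,
     nth 0 x a < nth 0 x b.+1 & nth 0 x b = (nth 0 x b.+1).+1].

(* Main.v *)
Require Import Defs.
From mathcomp Require Import all_boot zify.
Set Implicit Arguments. Unset Strict Implicit. Unset Printing Implicit Defensive.

Lemma iso132 u v w : order_iso [::u;v;w] [::1;3;2] = (u < w) && (w < v).
Proof.
rewrite /order_iso /= !ltnn.
case: (ltngtP u v); case: (ltngtP u w); case: (ltngtP v w) => //=.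
all: try (move=> *; exfalso; lia).
Qed.
Lemma iso321 u v w : order_iso [::u;v;w] [::3;2;1] = (w < v) && (v < u).
Proof.
rewrite /order_iso /= !ltnn.
case: (ltngtP u v); case: (ltngtP u w); case: (ltngtP v w) => //=.
all: try (move=> *; exfalso; lia).
Qed.
Lemma iso21 u v : order_iso [::u;v] [::2;1] = (v < u).
Proof. rewrite /order_iso /= !ltnn. by case: (ltngtP u v). Qed.

Lemma bitseqs_size k m : size m = k -> m \in bitseqs k.
Proof.
elim: k m => [|k IH] [|b m] //= [] Hm.
by rewrite !mem_cat; case: b; rewrite (map_f _ (IH _ Hm)) ?orbT.
Qed.

Lemma containsP s p : reflect (exists2 t, subseq t s & order_iso t p) (contains s p).
Proof.
apply: (iffP hasP) => [[m _ H] | [t /subseqP [m Hm ->] H]].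
  by exists (mask m s) => //; exact: mask_subseq.
by exists m => //; exact: bitseqs_size.
Qed.

Lemma iso_size t p : order_iso t p -> size t = size p.
Proof. by case/andP => /eqP. Qed.

Lemma has3 s p : contains s p -> size p = 3 ->
  exists u v w, subseq [::u;v;w] s /\ order_iso [::u;v;w] p.
Proof.
move=> /containsP [t st H] Hp; move: (iso_size H); rewrite Hp.
case: t st H => [|u [|v [|w [|x r]]]] st H E; try discriminate.
by exists u, v, w.
Qed.

Lemma has2 s p : contains s p -> size p = 2 ->
  exists u v, subseq [::u;v] s /\ order_iso [::u;v] p.
Proof.
move=> /containsP [t st H] Hp; move: (iso_size H); rewrite Hp.
case: t st H => [|u [|v [|x r]]] st H E; try discriminate.
by exists u, v.
Qed.

Definition T1 := [:: [:: 1; 3; 2]; [:: 3; 2; 1]].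
Definition T2 := [:: [:: 2; 1]].

Lemma avT1_sub s u v w : avoids_all T1 s -> subseq [::u;v;w] s ->
  ~~ ((u < w) && (w < v)) && ~~ ((w < v) && (v < u)).
Proof.
rewrite /avoids_all /= andbT => /andP [H1 H2] S; apply/andP; split.
  apply/negP => H; move/negP: H1; apply; apply/containsP; exists [::u;v;w] => //.
  by rewrite iso132.
apply/negP => H; move/negP: H2; apply; apply/containsP; exists [::u;v;w] => //.
by rewrite iso321.
Qed.

Lemma avT1_intro s : (forall u v w, subseq [::u;v;w] s ->
  ~~ ((u < w) && (w < v)) && ~~ ((w < v) && (v < u))) -> avoids_all T1 s.
Proof.
move=> H; rewrite /avoids_all /= andbT; apply/andP; split; apply/negP.
  move=> /has3 /(_ erefl) [u [v [w [S I]]]]; rewrite iso132 in I.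
  by move: (H u v w S); rewrite I.
move=> /has3 /(_ erefl) [u [v [w [S I]]]]; rewrite iso321 in I.
by move: (H u v w S); rewrite I andbF.
Qed.

Lemma avT2_sub s u v : avoids_all T2 s -> subseq [::u;v] s -> u <= v.
Proof.
rewrite /avoids_all /= andbT => H S; rewrite leqNgt; apply/negP => L.
move/negP: H; apply; apply/containsP; exists [::u;v] => //; by rewrite iso21.
Qed.

Lemma avT2_not s u v : subseq [::u;v] s -> v < u -> ~~ avoids_all T2 s.
Proof.
move=> S L; rewrite /avoids_all /= andbT negbK; apply/containsP.
by exists [::u;v] => //; rewrite iso21.
Qed.

Lemma contains_cons s a p : contains s p -> contains (a::s) p.
Proof.
case/containsP => t st H; apply/containsP; exists t => //.
exact: subseq_trans st (subseq_cons s a).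
Qed.

Lemma avoids_tail T a s : avoids_all T (a::s) -> avoids_all T s.
Proof.
move/allP => H; apply/allP => p Hp; move: (H p Hp); apply: contra.
exact: contains_cons.
Qed.

Lemma avoids1 T a : all (fun p => 2 <= size p) T -> avoids_all T [::a].
Proof.
move/allP => H; apply/allP => p Hp; apply/negP => /containsP [t st I].
have := size_subseq st; rewrite (iso_size I) /=; have := H p Hp; lia.
Qed.

Ltac fl Hf := move: Hf; rewrite ?size_cat /=; lia.
Ltac mt := rewrite ?(mem_cat, inE, mem_rev, in_nil, orbF, orFb); rewrite -?(rwP orP); tauto.

Lemma runL1 T f inp stk out : 2 * size inp + size stk < f ->
  exists rest, stack_run T f inp stk out = rev out ++ rest /\ {subset inp ++ stk <= rest}.
Proof.
elim: f inp stk out => [|f IH] inp stk out; first by rewrite ltn0.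
move=> Hf /=.
case: inp Hf => [|a inp] Hf.
  case: stk Hf => [|b stk] Hf; first by exists [::]; rewrite cats0.
  case: (IH [::] stk (b::out)) => [|rest [-> Hs]]; first by fl Hf.
  exists (b :: rest); split; first by rewrite rev_cons cat_rcons.
  move=> z; move: (Hs z); mt.
case: ifP => Hav.
  case: (IH inp (a::stk) out) => [|rest [-> Hs]]; first by fl Hf.
  exists rest; split => // z Hz; apply: Hs; move: Hz; mt.
case: stk Hf Hav => [|b stk] Hf Hav.
  case: (IH inp [::a] out) => [|rest [-> Hs]]; first by fl Hf.
  exists rest; split => // z Hz; apply: Hs; move: Hz; mt.
case: (IH (a::inp) stk (b::out)) => [|rest [-> Hs]]; first by fl Hf.
exists (b :: rest); split; first by rewrite rev_cons cat_rcons.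
move=> z; move: (Hs z); mt.
Qed.

Lemma run_push T f a inp stk out : avoids_all T (a::stk) ->
  stack_run T f.+1 (a::inp) stk out = stack_run T f inp (a::stk) out.
Proof. by move=> H /=; rewrite H. Qed.

Lemma run_pop T f a b inp stk out : ~~ avoids_all T (a::b::stk) ->
  stack_run T f.+1 (a::inp) (b::stk) out = stack_run T f (a::inp) stk (b::out).
Proof. by move=> /negbTE H /=; rewrite H. Qed.

Lemma runL4 T f inp s1 e s2 out : 2 * size inp + size (s1 ++ e :: s2) < f ->
  exists u w, stack_run T f inp (s1 ++ e :: s2) out = rev out ++ u ++ e :: w
    /\ {subset s1 <= u} /\ {subset s2 <= w}.
Proof.
elim: f inp s1 out => [|f IH] inp s1 out; first by rewrite ltn0.
move=> Hf /=.
case: inp Hf => [|a inp] Hf.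
  case: s1 Hf => [|b s1] Hf /=.
    have Hf' : 2 * size ([::] : seq nat) + size s2 < f by simpl in Hf |- *; lia.
    have [rest [-> Hs]] := @runL1 T f [::] s2 (e::out) Hf'.
    exists [::], rest; rewrite rev_cons cat_rcons; split => //; split => // z; exact: Hs.
  case: (IH [::] s1 (b::out)) => [|u [w [-> [H1 H2]]]]; first by fl Hf.
  exists (b::u), w; rewrite rev_cons cat_rcons; split => //; split => // z.
  by move: (H1 z); mt.
case: ifP => Hav.
  case: (IH inp (a::s1) out) => [|u [w [-> [H1 H2]]]]; first by fl Hf.
  exists u, w; split => //; split => // z Hz; apply: H1; move: Hz; mt.
case: s1 Hf Hav => [|b s1] Hf Hav /=.
  have Hf' : 2 * size (a::inp) + size s2 < f by simpl in Hf |- *; lia.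
  have [rest [-> Hs]] := @runL1 T f (a::inp) s2 (e::out) Hf'.
  exists [::], rest; rewrite rev_cons cat_rcons; split => //; split => // z Hz; apply: Hs; move: Hz; mt.
case: (IH (a::inp) s1 (b::out)) => [|u [w [-> [H1 H2]]]]; first by fl Hf.
exists (b::u), w; rewrite rev_cons cat_rcons; split => //; split => // z.
by move: (H1 z); mt.
Qed.

Section Proc.
Variable T : seq (seq nat).
Variable I : seq nat -> seq nat -> Prop.
Hypothesis H1 : forall a, avoids_all T [::a].
Hypothesis Hpop : forall a b stk out, avoids_all T (b::stk) -> I (b::stk) out ->
  ~~ avoids_all T (a::b::stk) -> I stk (b::out).
Hypothesis Hpush : forall a stk out, I stk out -> avoids_all T (a::stk) -> I (a::stk) out.

Lemma runS a w stk out f : avoids_all T stk -> I stk out -> 2 * size (a::w) + size stk < f ->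
  exists s0 stk1 f', [/\ stk = s0 ++ stk1,
    stack_run T f (a::w) stk out = stack_run T f' w (a::stk1) (rev s0 ++ out),
    2 * size w + size (a::stk1) < f', avoids_all T (a::stk1) & I (a::stk1) (rev s0 ++ out)].
Proof.
elim: stk out f => [|b stk IH] out f Hav HI Hf.
  case: f Hf => [|f] Hf; first by move: Hf; rewrite ltn0.
  exists [::], [::], f; rewrite run_push //; split => //; first by simpl in Hf |- *; lia.
  exact: Hpush.
case: f Hf => [|f] Hf; first by move: Hf; rewrite ltn0.
case Hab: (avoids_all T (a::b::stk)).
  exists [::], (b::stk), f; rewrite run_push //; split => //; first by simpl in Hf |- *; lia.
  exact: Hpush.
rewrite run_pop ?Hab //.
have [s0 [stk1 [f' [E R F A II]]]] := IH (b::out) f (avoids_tail Hav)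
  (Hpop Hav HI (negbT Hab)) ltac:(simpl in Hf |- *; lia).
exists (b::s0), stk1, f'; rewrite R E rev_cons cat_rcons; split => //.
Qed.

Lemma runL2 u w stk out f : avoids_all T stk -> I stk out -> 2 * size (u ++ w) + size stk < f ->
  exists stk' out' f', [/\ stack_run T f (u ++ w) stk out = stack_run T f' w stk' out',
    2 * size w + size stk' < f', avoids_all T stk', I stk' out' &
    {subset u ++ stk ++ out <= stk' ++ out'} /\ {subset stk' <= u ++ stk}].
Proof.
elim: u stk out f => [|a u IH] stk out f Hav HI Hf.
  by exists stk, out, f; split => //; split => z.
have [s0 [stk1 [f1 [E R F A II]]]] := @runS a (u ++ w) stk out f Hav HI Hf.
have [stk' [out' [f' [R' F' A' I' [S1 S2]]]]] := IH (a::stk1) (rev s0 ++ out) f1 A II F.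
exists stk', out', f'; split => //; first by rewrite cat_cons R.
split => z; first by move: (S1 z); rewrite E; mt.
by move: (S2 z); rewrite E; mt.
Qed.
End Proc.

Lemma popT2 f q W stk out p : avoids_all T2 stk -> p \in stk -> p < q ->
  2 * size (q::W) + size stk < f ->
  exists stk'' out'' f'', [/\ stack_run T2 f (q::W) stk out = stack_run T2 f'' (q::W) stk'' out'',
    2 * size (q::W) + size stk'' < f'' & p \in out''].
Proof.
elim: stk out f => [|t s IH] out f // Hav Hp Hq Hf.
case: f Hf => [|f] Hf; first by move: Hf; rewrite ltn0.
have Htp : t <= p.
  move: Hp; rewrite inE => /orP [/eqP -> //| Hps].
  by apply: (avT2_sub Hav); rewrite /= eqxx sub1seq.
rewrite run_pop; last first.
  apply: (@avT2_not _ q t); first by rewrite /= !eqxx ?sub0seq.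
  lia.
case: (eqVneq t p) => [<-|Htp'].
  exists s, (t::out), f; split => //; last by rewrite inE eqxx.
  by simpl in Hf |- *; lia.
have Hps : p \in s by move: Hp; rewrite inE eq_sym (negbTE Htp').
have [stk'' [out'' [f'' [R F P]]]] := IH (t::out) f (avoids_tail Hav) Hps Hq
  ltac:(simpl in Hf |- *; lia).
by exists stk'', out'', f''; split.
Qed.

Lemma T1_pop a b s : avoids_all T1 (b::s) -> ~~ avoids_all T1 (a::b::s) ->
  exists2 w, w \in s & w <= b.
Proof.
move=> Hav Hn.
case: (boolP (has (fun w => w <= b) s)) => [/hasP [w Hw Hwb] | Hno]; first by exists w.
have Hlt : forall z, z \in s -> b < z.
  move=> z Hz; rewrite ltnNge; apply/negP => Hzb; apply: (negP Hno); apply/hasP; by exists z.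
exfalso; move/negP: Hn; apply; apply: avT1_intro => u v w S.
rewrite /= in S; case: eqP S => [Eu|_] S; last exact: avT1_sub Hav S.
case: eqP S => [Ev|Hv] S.
  have := Hlt w; rewrite -sub1seq => /(_ S) Hbw.
  by apply/andP; split; apply/negP => /andP [? ?]; lia.
have Sb : subseq [:: b; v; w] (b::s) by rewrite /= eqxx.
have Hbw : b < w by apply: Hlt; apply: (mem_subseq S); rewrite !inE eqxx orbT.
move: (avT1_sub Hav Sb) => /andP [/negP N1 _].
apply/andP; split; apply/negP => /andP [X Y]; apply: N1; apply/andP; split => //; lia.
Qed.

Lemma T1_push p stk : avoids_all T1 (p.+1::stk) -> p.+1 \notin stk ->
  avoids_all T1 (p::p.+1::stk).
Proof.
move=> Hav Hq; apply: avT1_intro => u v w S.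
rewrite /= in S; case: eqP S => [Eu|_] S; last exact: avT1_sub Hav S.
case: eqP S => [Ev|Hv] S.
  by subst; apply/andP; split; apply/negP => /andP [? ?]; lia.
have Sb : subseq [:: p.+1; v; w] (p.+1::stk) by rewrite /= eqxx.
have Hw : w != p.+1.
  by apply: contraNneq Hq => <-; apply: (mem_subseq S); rewrite !inE eqxx orbT.
move/eqP: Hw => Hw.
move: (avT1_sub Hav Sb) => /andP [/negP N1 /negP N2]; subst u.
apply/andP; split; apply/negP => /andP [X Y]; [apply: N1 | apply: N2];
  apply/andP; split; lia.
Qed.

Definition I1 (stk out : seq nat) : Prop :=
  forall v, v \in stk ++ out -> exists2 w, w \in stk & w <= v.

Lemma H1T1 a : avoids_all T1 [::a].
Proof. exact: avoids1. Qed.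
Lemma H1T2 a : avoids_all T2 [::a].
Proof. exact: avoids1. Qed.

Lemma Hpush1 a stk out : I1 stk out -> avoids_all T1 (a::stk) -> I1 (a::stk) out.
Proof.
move=> HI _ v; rewrite cat_cons inE => /orP [/eqP ->|Hv].
  by exists a; rewrite ?inE ?eqxx.
have [w Hw Hwv] := HI v Hv; exists w => //; by rewrite inE Hw orbT.
Qed.

Lemma Hpop1 a b stk out : avoids_all T1 (b::stk) -> I1 (b::stk) out ->
  ~~ avoids_all T1 (a::b::stk) -> I1 stk (b::out).
Proof.
move=> Hav HI Hn v Hv.
have [w Hw Hwv] : exists2 w, w \in b :: stk & w <= v by apply: HI; move: Hv; mt.
move: Hw; rewrite inE => /orP [/eqP Ew|Hw]; last by exists w.
have [w' Hw' Hw'b] := T1_pop Hav Hn; exists w' => //; lia.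
Qed.

Lemma Hpop2 a b stk (out : seq nat) : avoids_all T2 (b::stk) -> True ->
  ~~ avoids_all T2 (a::b::stk) -> True.
Proof. by []. Qed.
Lemma Hpush2 (a : nat) (stk out : seq nat) : True -> avoids_all T2 (a::stk) -> True.
Proof. by []. Qed.

Lemma run1 x1 p x3 v : uniq (x1 ++ p.+1 :: p :: x3) -> v \in x1 -> v < p ->
  exists U W r, [/\ stack_map T1 (x1 ++ p.+1 :: p :: x3) = U ++ p.+1 :: W,
     p \in U, r \in W & r < p].
Proof.
move=> Hu Hv Hvp.
have Hq1 : p.+1 \notin x1.
  move: Hu; rewrite cat_uniq => /and3P [_ H _]; apply: contra H => Hq.
  by apply/hasP; exists p.+1; rewrite ?inE ?eqxx.
rewrite /stack_map.
set f := _.*2.+1.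
have Hf0 : 2 * size (x1 ++ p.+1 :: p :: x3) + size ([::] : seq nat) < f by rewrite /f -mul2n /= addn0.
have [stk' [out' [f' [R F A II [S1 S2]]]]] :=
  @runL2 T1 I1 H1T1 Hpop1 Hpush1 x1 (p.+1 :: p :: x3) [::] [::] f isT
    (fun v => ltac:(by [])) Hf0.
rewrite R.
have Hv' : v \in stk' ++ out' by apply: S1; rewrite mem_cat Hv.
have [s0 [stk1 [f1 [E R' F' A' II']]]] :=
  @runS T1 I1 H1T1 Hpop1 Hpush1 (p.+1) (p :: x3) stk' out' f' A II F.
rewrite R'.
have [r Hr Hrv] : exists2 r, r \in p.+1 :: stk1 & r <= v.
  by apply: II'; move: Hv'; rewrite E; mt.
have Hr1 : r \in stk1 by move: Hr; rewrite inE => /orP [/eqP ?|//]; lia.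
have Hq2 : p.+1 \notin stk1.
  apply: contra Hq1 => H; have := S2 (p.+1); rewrite cats0; apply; by rewrite E mem_cat H orbT.
move: R'; case: f1 F' => [|f2] F' R'; first by move: F'; rewrite ltn0.
rewrite run_push; last exact: T1_push.
have [u [w [Ey [Hu1 Hu2]]]] := @runL4 T1 f2 x3 [:: p] (p.+1) stk1 (rev s0 ++ out')
  ltac:(simpl in F' |- *; lia).
exists (rev (rev s0 ++ out') ++ u), w, r; split => //.
- by rewrite /= in Ey; rewrite Ey catA.
- by rewrite mem_cat Hu1 ?orbT // inE.
- exact: Hu2.
- lia.
Qed.

Lemma run2 U q W p r : p \in U -> r \in W -> p < q ->
  exists A B, west (U ++ q :: W) = A ++ B /\ p \in A /\ r \in B.
Proof.
move=> HpU HrW Hpq.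
rewrite /west -/T2 /stack_map.
set f := _.*2.+1.
have Hf0 : 2 * size (U ++ q :: W) + size ([::] : seq nat) < f by rewrite /f -mul2n /= addn0.
have [stk' [out' [f' [R F A _ [S1 _]]]]] :=
  @runL2 T2 (fun _ _ => True) H1T2 Hpop2 Hpush2 U (q :: W) [::] [::] f isT
    I Hf0.
rewrite R.
have : p \in stk' ++ out' by apply: S1; rewrite mem_cat HpU.
rewrite mem_cat => /orP [Hs|Ho].
  have [stk'' [out'' [f'' [R' F' Hp]]]] := popT2 out' A Hs Hpq F.
  rewrite R'.
  have [rest [-> Hr]] := runL1 T2 out'' F'.
  exists (rev out''), rest; split => //; split; first by rewrite mem_rev.
  by apply: Hr; rewrite mem_cat inE HrW !orbT.
have [rest [-> Hr]] := runL1 T2 out' F.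
exists (rev out'), rest; split => //; split; first by rewrite mem_rev.
by apply: Hr; rewrite mem_cat inE HrW !orbT.
Qed.

Theorem proposition3p3 (n : nat) (x : seq nat) :
  x \in Sort n [:: 1; 3; 2] [:: 3; 2; 1] -> ~ contains_132star x.
Proof.
rewrite unfold_in => /andP [Hperm /eqP Hw] [a [b [Hab Hb Hlt Heq]]].
have Hux : uniq x by rewrite (perm_uniq Hperm) iota_uniq.
set p := nth 0 x b.+1 in Hlt Heq.
have Ex : x = take b x ++ p.+1 :: p :: drop b.+2 x.
  rewrite -{1}(cat_take_drop b x) (drop_nth 0) -?Heq; last lia.
  by rewrite (drop_nth 0).
have Hv : nth 0 x a \in take b x.
  have Hbs : b < size x by lia.
  by rewrite -(nth_take 0 Hab); apply: mem_nth; rewrite size_take Hbs.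
rewrite Ex in Hux.
have [U [W [r [Ey HpU HrW Hrp]]]] := run1 Hux Hv Hlt.
rewrite -/T1 Ex Ey in Hw.
have [A [B [E [HpA HrB]]]] := run2 HpU HrW (ltnSn p).
rewrite E in Hw.
have := iota_ltn_sorted 1 n; rewrite (sorted_pairwise ltn_trans) -Hw pairwise_cat.
case/and3P => /allrelP H _ _; have := H p r HpA HrB; lia.
Qed.
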